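(* Let $1\leq a_1\leq\cdots\leq a_k$, $k\geq 3$, be an arbitrary partition of a natural number $n$. Then $$S(a_1,\dots,a_k)\prec S(\underbrace{1,\dots,1}_{k},n-k),$$ where the right-hand tree has $k$ branches of length $1$ and one branch of length $n-k$.
   Context: $M_k(G)$ denotes the number of closed walks of length $k$ in a graph $G$. For graphs $G,H$, $G\prec H$ means $M_k(G)\leq M_k(H)$ for all $k\geq 0$ with strict inequality for at least one $k$. For positive integers $c_1,\dots,c_m$, the starlike tree $S(c_1,\dots,c_m)$ is obtained from disjoint paths $P_{c_1+1},\dots,P_{c_m+1}$ ($P_r$ the path on $r$ vertices) by identifying one end vertex of each path into a single vertex (the center); the resulting pendant paths from the center are the branches, of lengths $c_1,\dots,c_m$. *)

(* Defs.v *)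
From mathcomp Require Import all_boot.
Set Implicit Arguments. Unset Strict Implicit. Unset Printing Implicit Defensive.

Definition closed_walks (V : finType) (e : rel V) (k : nat) : nat :=
  #|[set w : {ffun 'I_k.+1 -> V} |
      (w ord0 == w ord_max) &&
      [forall i : 'I_k, e (w (widen_ord (leqnSn k) i)) (w (lift ord0 i))]]|.

Definition walk_prec (V : finType) (e : rel V) (W : finType) (f : rel W) : Prop :=
  (forall k, closed_walks e k <= closed_walks f k) /\
  (exists k, closed_walks e k < closed_walks f k).

(* Starlike tree S(c_1,...,c_m), c given as a sequence.
   Vertices: None = the center; Some (i, j) = the (j+1)-th vertex of branch i
   counted from the center, j < c_i. *)
Definition star_vert (c : seq nat) : finType :=
  option {i : 'I_(size c) & 'I_(nth 0 c i)}.

Definition star_adj (c : seq nat) : rel (star_vert c) :=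
  fun x y =>
    match x, y with
    | None, None => false
    | None, Some v => val (tagged v) == 0
    | Some u, None => val (tagged u) == 0
    | Some u, Some v =>
        (tag u == tag v) &&
        (((val (tagged u)).+1 == val (tagged v)) ||
         ((val (tagged v)).+1 == val (tagged u)))
    end.

(* Main.v *)
Require Import Defs.
From mathcomp Require Import all_boot zify.
Set Implicit Arguments. Unset Strict Implicit. Unset Printing Implicit Defensive.

Lemma card_sv (c : seq nat) : #|star_vert c| = (\sum_(i < size c) nth 0 c i).+1.
Proof.
rewrite /star_vert card_option card_tagged.
rewrite sumnE big_map big_enum /=.
by apply/congr1/eq_bigr => i _; rewrite card_ord.
Qed.

Lemma cw0 (V : finType) (e : rel V) : closed_walks e 0 = #|V|.
Proof.
rewrite /closed_walks.
have -> : [set w : {ffun 'I_1 -> V} | (w ord0 == w ord_max) &&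
      [forall i : 'I_0, e (w (widen_ord (leqnSn 0) i)) (w (lift ord0 i))]] = setT.
  apply/setP => w; rewrite !inE.
  have -> : (ord_max : 'I_1) = ord0 by apply: val_inj.
  by rewrite eqxx /=; apply/forallP => -[].
by rewrite cardsT card_ffun card_ord expn1.
Qed.

Definition wn (V : Type) L (w : {ffun 'I_L.+1 -> V}) (s : nat) := w (inord s).
Definition mkwalk (V : Type) L (G : nat -> V) : {ffun 'I_L.+1 -> V} := [ffun t => G (val t)].

Lemma wn_mk (V : Type) L (G : nat -> V) s : s <= L -> wn (mkwalk L G) s = G s.
Proof. by move=> hs; rewrite /wn /mkwalk ffunE; congr G; apply: inordK. Qed.

Definition cwset (V : finType) (e : rel V) L :=
  [set w : {ffun 'I_L.+1 -> V} | (w ord0 == w ord_max) &&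
      [forall i : 'I_L, e (w (widen_ord (leqnSn L) i)) (w (lift ord0 i))]].

Lemma cwE (V : finType) (e : rel V) L : closed_walks e L = #|cwset e L|.
Proof. by []. Qed.

Lemma cwP (V : finType) (e : rel V) L (w : {ffun 'I_L.+1 -> V}) :
  (w \in cwset e L) <-> (wn w 0 = wn w L /\ forall s, s < L -> e (wn w s) (wn w s.+1)).
Proof.
rewrite /cwset inE /wn.
have E0 : (inord 0 : 'I_L.+1) = ord0 by apply: val_inj; rewrite /= inordK.
have EL : (inord L : 'I_L.+1) = ord_max by apply: val_inj; rewrite /= inordK.
rewrite E0 EL; split.
  move=> /andP [/eqP h1 /forallP h2]; split => // s hs.
  have := h2 (Ordinal hs).
  have -> : widen_ord (leqnSn L) (Ordinal hs) = inord s by apply: val_inj; rewrite /= inordK // ltnS ltnW.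
  have -> // : lift ord0 (Ordinal hs) = inord s.+1 by apply: val_inj; rewrite /= inordK // ltnS.
move=> [h1 h2]; rewrite h1 eqxx /=; apply/forallP => i.
have := h2 i (ltn_ord i).
have -> : widen_ord (leqnSn L) i = inord i by apply: val_inj; rewrite /= inordK // ltnS ltnW.
have -> // : lift ord0 i = inord i.+1 by apply: val_inj; rewrite /= inordK // ltnS.
Qed.

Lemma wn_ext (V : Type) L (w w' : {ffun 'I_L.+1 -> V}) :
  (forall s, s <= L -> wn w s = wn w' s) -> w = w'.
Proof.
move=> h; apply/ffunP => t; have := h _ (ltn_ord t).
by rewrite /wn inord_val.
Qed.

Lemma card_inj_le (T T' : finType) (A : {set T}) (B : {set T'}) (f : T -> T') :
  {in A &, injective f} -> (forall x, x \in A -> f x \in B) -> #|A| <= #|B|.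
Proof.
move=> inj hB; rewrite -(card_in_imset inj); apply: subset_leq_card.
by apply/subsetP => y /imsetP [x xA ->]; apply: hB.
Qed.

Lemma card_inj_lt (T T' : finType) (A : {set T}) (B : {set T'}) (f : T -> T') y :
  {in A &, injective f} -> (forall x, x \in A -> f x \in B) ->
  y \in B -> (forall x, x \in A -> f x <> y) -> #|A| < #|B|.
Proof.
move=> inj hB yB hy; rewrite -(card_in_imset inj) (cardsD1 y B) yB add1n ltnS.
apply: subset_leq_card; apply/subsetP => z /imsetP [x xA ->].
rewrite !inE hB // andbT; apply/eqP; exact: hy.
Qed.

Lemma sv_eq (s : nat) (f : 'I_s -> nat) (u u' : {i : 'I_s & 'I_(f i)}) :
  val (tag u) = val (tag u') -> val (tagged u) = val (tagged u') -> u = u'.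
Proof.
case: u => i j; case: u' => i' j' /= /val_inj ei; subst i' => /val_inj -> //.
Qed.

Lemma star_adj_sym (c : seq nat) (x y : star_vert c) : star_adj x y = star_adj y x.
Proof.
case: x => [u|]; case: y => [v|] //=; rewrite eq_sym; congr (_ && _); by rewrite orbC.
Qed.

Definition mkv (c : seq nat) (i j : nat) : star_vert c :=
  match (insub i : option 'I_(size c)) with
  | Some i' => match (insub j : option 'I_(nth 0 c i')) with
               | Some j' => Some (Tagged (fun i0 : 'I_(size c) => 'I_(nth 0 c i0)) j')
               | None => None end
  | None => None end.

Lemma mkvP (c : seq nat) i j : i < size c -> j < nth 0 c i ->
  exists u, mkv c i j = Some u /\ val (tag u) = i /\ val (tagged u) = j.
Proof.
move=> hi hj; rewrite /mkv (insubT (fun x => x < size c) hi) /=.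
rewrite (insubT (fun x => x < nth 0 c i) hj) /=.
by eexists; split.
Qed.

Lemma mkv_tag (c : seq nat) i j u : mkv c i j = Some u -> val (tag u) = i /\ val (tagged u) = j.
Proof.
rewrite /mkv; case: insubP => [i' _ ei|] //; case: insubP => [j' _ ej|] //.
by move=> [<-] /=; split.
Qed.

Section Star.
Variables (a : seq nat) (n : nat).
Hypothesis Hpos : all (fun x => 0 < x) a.
Hypothesis Hsum : \sum_(x <- a) x = n.
Hypothesis Hk : size a < n.
Hypothesis Hk0 : 0 < size a.

Let k := size a.
Definition bb := nseq k 1 ++ [:: n - k].
Let m := n - k.

Lemma size_bb : size bb = k.+1.
Proof. by rewrite /bb size_cat size_nseq addn1. Qed.

Lemma nth_bb_lt i : i < k -> nth 0 bb i = 1.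
Proof. by move=> hi; rewrite /bb nth_cat size_nseq hi nth_nseq hi. Qed.

Lemma nth_bb_k : nth 0 bb k = m.
Proof. by rewrite /bb nth_cat size_nseq ltnn subnn. Qed.

Definition zpos (d : nat) : star_vert bb := if d is d'.+1 then mkv bb k d' else None.
Definition leaf (i : nat) : star_vert bb := mkv bb i 0.
Definition isleaf (v : star_vert bb) : bool := if v is Some u then nat_of_ord (tag u) < k else false.
Definition lidx (v : star_vert bb) : nat := if v is Some u then nat_of_ord (tag u) else 0.
Definition zd (v : star_vert bb) : nat := if v is Some u then (nat_of_ord (tagged u)).+1 else 0.

Lemma zposK d : d <= m -> zd (zpos d) = d.
Proof.
case: d => [|d] //= hd.
have [u [-> [_ h2]]] := @mkvP bb k d ltac:(by rewrite size_bb) ltac:(by rewrite nth_bb_k).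
by rewrite /= h2.
Qed.

Lemma isleaf_zpos d : isleaf (zpos d) = false.
Proof.
case: d => [|d] //=; case E: (mkv bb k d) => [u|] //=.
have [h1 _] := mkv_tag E; by rewrite /= h1 ltnn.
Qed.

Lemma leafP i : i < k -> isleaf (leaf i) /\ lidx (leaf i) = i.
Proof.
move=> hi; rewrite /leaf; have [u [-> [h1 h2]]] := @mkvP bb i 0 ltac:(by rewrite size_bb; lia) ltac:(by rewrite nth_bb_lt).
by rewrite /= h1.
Qed.

Lemma leaf_adj i : i < k -> star_adj (leaf i) None.
Proof.
move=> hi; have [u [E [h1 h2]]] := @mkvP bb i 0 ltac:(by rewrite size_bb; lia) ltac:(by rewrite nth_bb_lt).
by rewrite /leaf E /= h2.
Qed.

Lemma zpos_adj p : p < m -> star_adj (zpos p) (zpos p.+1).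
Proof.
move=> hp.
have [u [E [h1 h2]]] := @mkvP bb k p ltac:(by rewrite size_bb) ltac:(by rewrite nth_bb_k).
case: p hp E h2 => [|p] hp E h2 /=; first by rewrite E /= h2.
have hp' : p < nth 0 bb k by rewrite nth_bb_k; lia.
have [v [E' [h1' h2']]] := @mkvP bb k p ltac:(by rewrite size_bb) hp'.
rewrite E E' /=; apply/andP; split; first by apply/eqP/val_inj; rewrite h1 h1'.
by rewrite h2 h2' eqxx.
Qed.

Lemma zpos_adj' p q : p <= m -> q <= m -> (p.+1 == q) || (q.+1 == p) -> star_adj (zpos p) (zpos q).
Proof.
move=> hp hq /orP [/eqP e|/eqP e]; subst; first by apply: zpos_adj; lia.
by rewrite star_adj_sym; apply: zpos_adj; lia.
Qed.

Definition tg (x : star_vert a) : nat := if x is Some u then nat_of_ord (tag u) else 0.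
Definition dp (x : star_vert a) : nat := if x is Some u then nat_of_ord (tagged u) else 0.
Definition oo (i : nat) : nat := \sum_(0 <= j < i) (nth 0 a j - 1).

Lemma ooS i : oo i.+1 = oo i + (nth 0 a i - 1).
Proof. by rewrite /oo big_nat_recr. Qed.

Lemma oo_mono i i' : i <= i' -> oo i <= oo i'.
Proof.
move=> /subnKC <-; elim: (i' - i) => [|d IH]; first by rewrite addn0.
by rewrite addnS ooS; lia.
Qed.

Lemma apos j : j < k -> 0 < nth 0 a j.
Proof. by move=> hj; move/(all_nthP 0): Hpos => /(_ j hj). Qed.

Lemma sum_a : \sum_(0 <= j < k) nth 0 a j = n.
Proof. by rewrite -Hsum [RHS](big_nth 0). Qed.

Lemma oo_k : oo k = m.
Proof.
have : \sum_(0 <= j < k) (nth 0 a j - 1 + 1) = n.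
  rewrite -sum_a; apply: eq_big_nat => j /andP [_ hj].
  by have := apos hj; lia.
rewrite big_split /= sum_nat_const_nat subn0 muln1 => h.
by rewrite /m /oo; lia.
Qed.


Lemma block_le (u : {i : 'I_(size a) & 'I_(nth 0 a i)}) :
  oo (nat_of_ord (tag u)) + nat_of_ord (tagged u) <= m.
Proof.
have h1 : nat_of_ord (tagged u) < nth 0 a (nat_of_ord (tag u)) := ltn_ord (tagged u).
have h2 : (nat_of_ord (tag u)).+1 <= k by exact: ltn_ord.
have := oo_mono h2; rewrite ooS oo_k; lia.
Qed.

Lemma dp_le (u : {i : 'I_(size a) & 'I_(nth 0 a i)}) : nat_of_ord (tagged u) <= m.
Proof. have := block_le u; lia. Qed.

Definition gg (x y : star_vert a) : star_vert bb :=
  if y is Some v then zpos (nat_of_ord (tagged v)) else leaf (tg x).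
Definition hh (x : star_vert a) : star_vert bb :=
  if x is Some u then zpos (oo (nat_of_ord (tag u)) + nat_of_ord (tagged u)) else None.

Lemma tg_lt (u : {i : 'I_(size a) & 'I_(nth 0 a i)}) : tg (Some u) < k.
Proof. exact: ltn_ord. Qed.

Lemma gg_adj x y z : star_adj x y -> star_adj y z -> star_adj (gg x y) (gg y z).
Proof.
case: y => [v|]; case: z => [w|]; case: x => [u|] //=.
- move=> _ /andP [_ hvw]; apply: zpos_adj'; [exact: dp_le | exact: dp_le | exact: hvw].
- move=> _ /andP [_ hvw]; apply: zpos_adj'; [exact: dp_le | exact: dp_le | exact: hvw].
- move=> _ /eqP ->; rewrite star_adj_sym; apply: leaf_adj; exact: ltn_ord.
- move=> _ /eqP ->; rewrite star_adj_sym; apply: leaf_adj; exact: ltn_ord.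
- move=> _ /eqP ->; apply: leaf_adj; exact: ltn_ord.
Qed.

Lemma isleaf_gg x y : star_adj x y -> isleaf (gg x y) = (y == None).
Proof.
case: y => [v|]; case: x => [u|] //= _; first by rewrite isleaf_zpos.
by rewrite isleaf_zpos.
by have [-> _] := leafP (ltn_ord (tag u)).
Qed.

Lemma hh_adj u v : star_adj (Some u) (Some v) -> star_adj (hh (Some u)) (hh (Some v)).
Proof.
move=> /= /andP [/eqP e h]; apply: zpos_adj'; try exact: block_le.
have eo : oo (nat_of_ord (tag u)) = oo (nat_of_ord (tag v)) by rewrite e.
by case/orP: h => /eqP h; apply/orP; [left|right]; apply/eqP; rewrite ?eo -h addnS ?eo.
Qed.


Lemma adjSS (c : seq nat) (u v : {i : 'I_(size c) & 'I_(nth 0 c i)}) :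
  star_adj (Some u) (Some v) = (tag u == tag v) &&
   (((nat_of_ord (tagged u)).+1 == nat_of_ord (tagged v)) || ((nat_of_ord (tagged v)).+1 == nat_of_ord (tagged u))).
Proof. by []. Qed.
Lemma adjSN (c : seq nat) (u : {i : 'I_(size c) & 'I_(nth 0 c i)}) :
  star_adj (Some u) None = (nat_of_ord (tagged u) == 0).
Proof. by []. Qed.
Lemma adjNS (c : seq nat) (u : {i : 'I_(size c) & 'I_(nth 0 c i)}) :
  star_adj None (Some u) = (nat_of_ord (tagged u) == 0).
Proof. by []. Qed.

Definition nxt L s := if s < L then s.+1 else 1.

Definition FF L (W : {ffun 'I_L.+1 -> star_vert a}) : {ffun 'I_L.+1 -> star_vert bb} :=
  if [exists t, W t == None] then mkwalk L (fun s => gg (wn W s) (wn W (nxt L s)))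
  else mkwalk L (fun s => hh (wn W s)).

Lemma exN L (W : {ffun 'I_L.+1 -> star_vert a}) :
  [exists t, W t == None] -> exists s, s <= L /\ wn W s = None.
Proof.
move=> /existsP [t /eqP ht]; exists t; split; first by rewrite -ltnS.
by rewrite /wn inord_val.
Qed.

Lemma nexN L (W : {ffun 'I_L.+1 -> star_vert a}) :
  ~~ [exists t, W t == None] -> forall s, wn W s <> None.
Proof.
move=> /existsPn h s; have := h (inord s); rewrite /wn => /eqP //.
Qed.

Lemma adj_nxt L (W : {ffun 'I_L.+1 -> star_vert a}) : 0 < L -> W \in cwset (@star_adj a) L ->
  forall s, s <= L -> star_adj (wn W s) (wn W (nxt L s)).
Proof.
move=> L0 /cwP [h0 h1] s hs; rewrite /nxt; case: ifP => hsL; first exact: h1.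
have -> : s = L by lia.
by rewrite -h0; apply: h1.
Qed.

Lemma FF_mem L (W : {ffun 'I_L.+1 -> star_vert a}) : 0 < L -> W \in cwset (@star_adj a) L ->
  FF W \in cwset (@star_adj bb) L.
Proof.
move=> L0 hW; have hn := adj_nxt L0 hW; move/cwP: hW => [h0 h1].
rewrite /FF; case: ifP => hex; apply/cwP; rewrite !wn_mk //.
- split; first by rewrite /nxt L0 h0 ltnn.
  move=> s hs; have hs' := ltnW hs; rewrite !wn_mk //; have -> : nxt L s = s.+1 by rewrite /nxt hs.
  apply: gg_adj; [exact: h1 | exact: hn].
- split; first by rewrite h0.
  move=> s hs; have hs' := ltnW hs; rewrite !wn_mk //; have := h1 s hs.
  have := nexN (negbT hex) (s:=s); have := nexN (negbT hex) (s:=s.+1).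
  case: (wn W s) => [u|] //; case: (wn W s.+1) => [v|] // _ _; exact: hh_adj.
Qed.


Lemma zd_hh (u : {i : 'I_(size a) & 'I_(nth 0 a i)}) :
  zd (hh (Some u)) = oo (nat_of_ord (tag u)) + nat_of_ord (tagged u).
Proof. by rewrite /= zposK //; apply: block_le. Qed.

Lemma oo_int i i' x : oo i <= x < oo i.+1 -> oo i' <= x < oo i'.+1 -> i = i'.
Proof.
move=> /andP [h1 h2] /andP [h3 h4]; case: (ltngtP i i') => // hii.
- have := oo_mono hii; lia.
- have := oo_mono hii; lia.
Qed.

Lemma slide_leaf L (W : {ffun 'I_L.+1 -> star_vert a}) : 0 < L -> W \in cwset (@star_adj a) L ->
  [exists t, W t == None] -> exists s, s <= L /\ isleaf (wn (FF W) s).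
Proof.
move=> L0 hW hex; have hn := adj_nxt L0 hW; move/cwP: (hW) => [h0 h1].
have [s [hs hN]] := exN hex.
have [t [ht1 ht2 htN]] : exists t, [/\ 1 <= t, t <= L & wn W t = None].
  case: s hs hN => [|s] hs hN; first by exists L; split => //; rewrite -h0.
  by exists s.+1.
exists t.-1; split; first lia.
rewrite /FF hex wn_mk; last lia.
have ent : nxt L t.-1 = t by rewrite /nxt; case: ifP; lia.
rewrite isleaf_gg ent ?htN //.
have := hn t.-1 ltac:(lia); by rewrite ent htN.
Qed.

Lemma block_noleaf L (W : {ffun 'I_L.+1 -> star_vert a}) :
  ~~ [exists t, W t == None] -> forall s, s <= L -> ~~ isleaf (wn (FF W) s).
Proof.
move=> hex s hs; rewrite /FF (negbTE hex) wn_mk //.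
by rewrite /=; case: (wn W s) => [u|] //=; rewrite isleaf_zpos.
Qed.


Lemma slide_inj L (W W' : {ffun 'I_L.+1 -> star_vert a}) : 0 < L ->
  W \in cwset (@star_adj a) L -> W' \in cwset (@star_adj a) L ->
  [exists t, W t == None] -> [exists t, W' t == None] -> FF W = FF W' -> W = W'.
Proof.
move=> L0 hW hW' hex hex' E.
have hn := adj_nxt L0 hW; have hn' := adj_nxt L0 hW'.
move/cwP: (hW) => [h0 h1]; move/cwP: (hW') => [h0' h1'].
have EU : forall s, s <= L -> gg (wn W s) (wn W (nxt L s)) = gg (wn W' s) (wn W' (nxt L s)).
  move=> s hs; have := congr1 (fun F => wn F s) E; rewrite /FF hex hex' !wn_mk //.
have ent : forall s, 1 <= s -> s <= L -> nxt L s.-1 = s by move=> s h1s hsL; rewrite /nxt; case: ifP; lia.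
have HN : forall s, 1 <= s -> s <= L -> (wn W s == None) = (wn W' s == None).
  move=> s h1s hsL; have := EU s.-1 ltac:(lia).
  move=> /(congr1 isleaf); rewrite !isleaf_gg ?ent //.
  - by have := hn' s.-1 ltac:(lia); rewrite ent.
  - by have := hn s.-1 ltac:(lia); rewrite ent.
pose P s := wn W s = wn W' s.
have step : forall s, 1 <= s -> s <= L -> P (nxt L s) -> P s.
  move=> s h1s hsL; rewrite /P => hy.
  have e1 := EU s hsL; have e2 := EU s.-1 ltac:(lia); rewrite ent // in e2.
  have a1 := hn s hsL; have a2 := hn' s hsL.
  have hns := HN s h1s hsL.
  rewrite -hy in e1 a2.
  move: e1 e2 a1 a2 hns.
  case: (wn W (nxt L s)) => [v|].
  - case: (wn W s) => [u|]; case: (wn W' s) => [u'|] //= e1 e2 a1 a2 _.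
    move/andP: a1 => [/eqP t1 _]; move/andP: a2 => [/eqP t2 _].
    have := congr1 zd e2; rewrite !zposK; try exact: dp_le.
    move=> hd; congr Some; apply: sv_eq => //=.
    by rewrite t1 t2.
  - case: (wn W s) => [u|]; case: (wn W' s) => [u'|] //= e1 e2 a1 a2 _.
    have := congr1 lidx e1; rewrite !(proj2 (leafP (ltn_ord _))) => ht.
    congr Some; apply: sv_eq => //=.
    by move/eqP: a1 => ->; move/eqP: a2 => ->.
have [s0 [hs0 hN0]] := exN hex.
have [t [ht1 ht2 htN]] : exists t, [/\ 1 <= t, t <= L & wn W t = None].
  case: s0 hs0 hN0 => [|s0] hs0 hN0; first by exists L; split => //; rewrite -h0.
  by exists s0.+1.
have Pt : P t.
  have := HN t ht1 ht2; rewrite /P htN eqxx => /esym/eqP ->; done.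
have A : forall d s, 1 <= s -> s + d = t -> P s.
  elim=> [|d IH] s h1s hsd; first by rewrite addn0 in hsd; rewrite hsd.
  apply: step => //; first lia.
  have -> : nxt L s = s.+1 by rewrite /nxt; case: ifP; lia.
  apply: IH; lia.
have P1 : P 1 by apply: (A t.-1); lia.
have PL : P L by apply: step => //; rewrite /nxt ltnn.
have B : forall d s, s + d = L -> t <= s -> P s.
  elim=> [|d IH] s hsd hts; first by rewrite addn0 in hsd; rewrite hsd.
  apply: step => //; try lia.
  have -> : nxt L s = s.+1 by rewrite /nxt; case: ifP; lia.
  apply: IH; lia.
apply: wn_ext => s hs.
case: s hs => [|s] hs; first by rewrite h0 h0'; exact: PL.
case: (leqP s.+1 t) => hst.
- apply: (A (t - s.+1)); lia.
- apply: (B (L - s.+1)); lia.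
Qed.


Lemma arith_blk (o o1 A x y : nat) : x < A -> y < A -> (x.+1 = y \/ y.+1 = x) ->
  o1 = o + (A - 1) -> o <= minn (o + x) (o + y) < o1.
Proof. move=> *; apply/andP; split; lia. Qed.

Lemma block_inj L (W W' : {ffun 'I_L.+1 -> star_vert a}) : 0 < L ->
  W \in cwset (@star_adj a) L -> W' \in cwset (@star_adj a) L ->
  ~~ [exists t, W t == None] -> ~~ [exists t, W' t == None] -> FF W = FF W' -> W = W'.
Proof.
move=> L0 hW hW' hex hex' E.
move/cwP: (hW) => [h0 h1]; move/cwP: (hW') => [h0' h1'].
have EU : forall s, s <= L -> hh (wn W s) = hh (wn W' s).
  move=> s hs; have := congr1 (fun F => wn F s) E; rewrite /FF (negbTE hex) (negbTE hex') !wn_mk //.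
have key : forall s, s < L -> wn W s = wn W' s.
  move=> s hs.
  have e1 := EU s (ltnW hs); have e2 := EU s.+1 hs.
  have a1 := h1 s hs; have a2 := h1' s hs.
  have n1 := nexN hex (s:=s); have n2 := nexN hex (s:=s.+1).
  have n1' := nexN hex' (s:=s); have n2' := nexN hex' (s:=s.+1).
  move: e1 e2 a1 a2 n1 n2 n1' n2'.
  case: (wn W s) => [u|] //; case: (wn W s.+1) => [v|] //.
  case: (wn W' s) => [u'|] //; case: (wn W' s.+1) => [v'|] // e1 e2 a1 a2 _ _ _ _.
  have z1 := congr1 zd e1; have z2 := congr1 zd e2.
  rewrite !zd_hh in z1 z2.
  move/andP: a1 => [/eqP t1 d1]; move/andP: a2 => [/eqP t2 d2].
  have o1 : oo (nat_of_ord (tag u)) = oo (nat_of_ord (tag v)) by rewrite t1.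
  have o2 : oo (nat_of_ord (tag u')) = oo (nat_of_ord (tag v')) by rewrite t2.
  have b1 : nat_of_ord (tagged u) < nth 0 a (nat_of_ord (tag u)) := ltn_ord _.
  have b2 : nat_of_ord (tagged v) < nth 0 a (nat_of_ord (tag v)) := ltn_ord _.
  have b1' : nat_of_ord (tagged u') < nth 0 a (nat_of_ord (tag u')) := ltn_ord _.
  have b2' : nat_of_ord (tagged v') < nth 0 a (nat_of_ord (tag v')) := ltn_ord _.
  have q1 : nth 0 a (nat_of_ord (tag u)) = nth 0 a (nat_of_ord (tag v)) by rewrite t1.
  have q2 : nth 0 a (nat_of_ord (tag u')) = nth 0 a (nat_of_ord (tag v')) by rewrite t2.
  have s1 := ooS (nat_of_ord (tag u)); have s2 := ooS (nat_of_ord (tag u')).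
  have dd1 : (nat_of_ord (tagged u)).+1 = nat_of_ord (tagged v) \/ (nat_of_ord (tagged v)).+1 = nat_of_ord (tagged u).
    by case/orP: d1 => /eqP h; [left|right].
  have dd2 : (nat_of_ord (tagged u')).+1 = nat_of_ord (tagged v') \/ (nat_of_ord (tagged v')).+1 = nat_of_ord (tagged u').
    by case/orP: d2 => /eqP h; [left|right].
  have ti : nat_of_ord (tag u) = nat_of_ord (tag u').
    apply: (@oo_int _ _ (minn (oo (nat_of_ord (tag u)) + nat_of_ord (tagged u)) (oo (nat_of_ord (tag v)) + nat_of_ord (tagged v)))).
    - apply/andP; split; lia.
    - rewrite z1 z2 -o2; apply: arith_blk b1' _ dd2 s2; by rewrite q2.
  have tu : tag u = tag u' by apply: val_inj.
  congr Some; apply: sv_eq => //=.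
  have eo : oo (nat_of_ord (tag u)) = oo (nat_of_ord (tag u')) by rewrite ti.
  by move: z1; rewrite eo => /addnI.
apply: wn_ext => s hs; case: (ltnP s L) => hsL; first exact: key.
have -> : s = L by lia.
by rewrite -h0 -h0'; apply: key.
Qed.

Lemma FF_inj L : 0 < L -> {in cwset (@star_adj a) L &, injective (@FF L)}.
Proof.
move=> L0 W W' hW hW' E.
case hx: [exists t, W t == None]; case hx': [exists t, W' t == None].
- exact: slide_inj.
- have [s [hs hl]] := slide_leaf L0 hW hx.
  by have := block_noleaf (negbT hx') hs; rewrite -E hl.
- have [s [hs hl]] := slide_leaf L0 hW' hx'.
  by have := block_noleaf (negbT hx) hs; rewrite E hl.
- apply: block_inj => //; by rewrite ?hx ?hx'.
Qed.


Lemma card_a : #|star_vert a| = n.+1.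
Proof. by rewrite card_sv -sum_a big_mkord. Qed.

Lemma card_bb : #|star_vert bb| = n.+1.
Proof.
rewrite card_sv size_bb big_ord_recr /= nth_bb_k.
rewrite (eq_bigr (fun _ => 1)); last by move=> i _; apply: nth_bb_lt.
rewrite sum_nat_const card_ord muln1 /m; congr S; lia.
Qed.

Lemma main_le L : closed_walks (@star_adj a) L <= closed_walks (@star_adj bb) L.
Proof.
case: L => [|L]; first by rewrite !cw0 card_a card_bb.
rewrite !cwE; apply: (@card_inj_le _ _ _ _ (@FF L.+1)); first exact: FF_inj.
by move=> W hW; apply: FF_mem.
Qed.

Lemma walk4P (V : finType) (e : rel V) (d : V) (l : seq V) :
  nth d l 0 = nth d l 4 -> e (nth d l 0) (nth d l 1) -> e (nth d l 1) (nth d l 2) ->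
  e (nth d l 2) (nth d l 3) -> e (nth d l 3) (nth d l 4) ->
  mkwalk 4 (nth d l) \in cwset e 4.
Proof.
move=> h0 h1 h2 h3 h4; apply/cwP; rewrite !wn_mk //; split => // s hs.
rewrite !wn_mk //; last exact: ltnW.
by case: s hs => [|[|[|[|]]]].
Qed.

Hypothesis Hsort : sorted leq a.
Hypothesis Hk2 : 1 < size a.

Let a0 := nth 0 a 0.

Lemma a0_le_m : 2 <= a0 -> a0 <= m.
Proof.
move=> h2; have h01 : a0 <= nth 0 a 1 by apply: (sortedP 0 Hsort 0).
have := oo_mono Hk2; rewrite oo_k !ooS /oo big_geq // add0n.
have := apos (ltnW Hk2); rewrite /a0 in h01 h2 *; lia.
Qed.

Lemma m_pos : 0 < m.
Proof. rewrite /m /k; lia. Qed.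

Lemma main_lt : exists L, closed_walks (@star_adj a) L < closed_walks (@star_adj bb) L.
Proof.
exists 4; rewrite !cwE.
have k0 : 0 < k by [].
have hzl : forall p, p <= m -> isleaf (zpos p) = false by move=> p _; apply: isleaf_zpos.
case: (ltnP 1 a0) => ha0.
- (* all branches long: crossing walk in the z path *)
  have hm := a0_le_m ha0.
  set l := [:: zpos (a0 - 2); zpos (a0 - 1); zpos a0; zpos (a0 - 1); zpos (a0 - 2)].
  apply: (@card_inj_lt _ _ _ _ (@FF 4) (mkwalk 4 (nth None l))); first exact: FF_inj.
  + by move=> W hW; apply: FF_mem.
  + apply: walk4P => //=; apply: zpos_adj'; lia.
  + move=> W hW E.
    case hx: [exists t, W t == None].
    * have [s [hs hl]] := slide_leaf (isT : 0 < 4) hW hx.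
      move: hl; rewrite E wn_mk //.
      by case: s hs => [|[|[|[|[|]]]]] //= _; rewrite isleaf_zpos.
    * move/cwP: (hW) => [h0 h1].
      have EU : forall s, s <= 4 -> hh (wn W s) = nth None l s.
        by move=> s hs; rewrite -(wn_mk (nth None l) hs) -E /FF hx wn_mk.
      have e0 := EU 0 isT; have e2 := EU 2 isT.
      have a01 := h1 0 isT; have a12 := h1 1 isT.
      have n0 := nexN (negbT hx) (s:=0); have n1 := nexN (negbT hx) (s:=1);
        have n2 := nexN (negbT hx) (s:=2).
      move: e0 e2 a01 a12 n0 n1 n2.
      case: (wn W 0) => [u0|] //; case: (wn W 1) => [u1|] //; case: (wn W 2) => [u2|] // e0 e2 a01 a12 _ _ _.
      have z0 := congr1 zd e0; have z2 := congr1 zd e2.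
      rewrite !zd_hh /= !zposK in z0 z2; try lia.
      move/andP: a01 => [/eqP t01 _]; move/andP: a12 => [/eqP t12 _].
      have t02 : nat_of_ord (tag u0) = nat_of_ord (tag u2) by rewrite t01 t12.
      have b2 : nat_of_ord (tagged u2) < nth 0 a (nat_of_ord (tag u2)) := ltn_ord _.
      case: (posnP (nat_of_ord (tag u2))) => E0.
      - have ea : nth 0 a (nat_of_ord (tag u2)) = a0 by rewrite E0.
        have eo : oo (nat_of_ord (tag u2)) = 0 by rewrite E0 /oo big_geq.
        move: b2 z2 ea eo; move: (nat_of_ord (tagged u2)) => x; move: (nth 0 a (tag u2)) (oo (tag u2)) => y z. lia.
      - have := oo_mono E0.
        have eo : oo (nat_of_ord (tag u0)) = oo (nat_of_ord (tag u2)) by rewrite t02.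
        rewrite ooS /oo big_geq // add0n -/(oo _) => ho.
        rewrite /a0 in ha0 hm z0; move: z0 eo ho ha0; move: (nat_of_ord (tagged u0)) (oo (tag u0)) (oo (tag u2)) (nth 0 a 0) => x y z w; lia.
-
  have ha1 : a0 = 1 by have := apos Hk0; rewrite /a0 in ha0 *; lia.
  have hm := m_pos.
  set l := [:: leaf 0; None; zpos 1; None; leaf 0].
  apply: (@card_inj_lt _ _ _ _ (@FF 4) (mkwalk 4 (nth None l))); first exact: FF_inj.
  + by move=> W hW; apply: FF_mem.
  + apply: walk4P.
    * by [].
    * exact: leaf_adj.
    * exact: (zpos_adj hm).
    * exact: (etrans (star_adj_sym _ _) (zpos_adj hm)).
    * exact: (etrans (star_adj_sym _ _) (leaf_adj k0)).
  + move=> W hW E.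
    case hx: [exists t, W t == None]; last first.
      have := block_noleaf (negbT hx) (isT : 0 <= 4); rewrite E wn_mk //=.
      by have [-> _] := leafP k0.
    have hn := adj_nxt (isT : 0 < 4) hW; move/cwP: (hW) => [h0 h1].
    have EU : forall s, s <= 4 -> gg (wn W s) (wn W (nxt 4 s)) = nth None l s.
      by move=> s hs; rewrite -(wn_mk (nth None l) hs) -E /FF hx wn_mk.
    have e2 : gg (wn W 2) (wn W 3) = zpos 1 := EU 2 isT.
    have e3 : gg (wn W 3) (wn W 4) = None := EU 3 isT.
    have e4 : gg (wn W 4) (wn W 1) = leaf 0 := EU 4 isT.
    have a23 := h1 2 isT; have a34 := h1 3 isT.
    have a41 : star_adj (wn W 4) (wn W 1) := hn 4 isT.
    have l2 := congr1 isleaf e2; rewrite isleaf_gg // isleaf_zpos in l2.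
    have l3 := congr1 isleaf e3; rewrite isleaf_gg // in l3.
    have l4 := congr1 isleaf e4; rewrite isleaf_gg // (proj1 (leafP k0)) in l4.
    move: e2 e3 e4 a34 a41 l2 l3 l4.
    case: (wn W 3) => [u3|] //; case: (wn W 4) => [u4|] //; case: (wn W 1) => [u1|] //.
    move=> e2 e3 e4 a34 _ _ _ _.
    have z2 := congr1 zd e2; rewrite /gg zposK in z2; last exact: dp_le.
    rewrite zposK in z2; last exact: hm.
    have := congr1 lidx e4; rewrite /gg (proj2 (leafP (tg_lt u4))) (proj2 (leafP k0)) => t4.
    move: a34; rewrite adjSS => /andP [/eqP t34 _].
    have b3 : nat_of_ord (tagged u3) < nth 0 a (nat_of_ord (tag u3)) := ltn_ord _.
    have t4' : nat_of_ord (tag u4) = 0 := t4.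
    have t3 : nth 0 a (nat_of_ord (tag u3)) = a0 by rewrite t34 t4'.
    move: b3 z2 t3 ha1; move: (nat_of_ord (tagged u3)) => x; move: (nth 0 a (nat_of_ord (tag u3))) => y.
    rewrite /a0; move: (nth 0 a 0) => w; lia.
Qed.

End Star.


Theorem proposition2 (n k : nat) (a : seq nat) :
  3 <= k -> size a = k -> all (fun x => 0 < x) a -> sorted leq a ->
  \sum_(x <- a) x = n -> k < n ->
  walk_prec (@star_adj a) (@star_adj (nseq k 1 ++ [:: n - k])).
Proof.
move=> hk3 hsz hpos hsort hsum hkn; subst k.
have h0 : 0 < size a by lia.
have h1 : 1 < size a by lia.
split.
- move=> L; exact: (main_le hpos hsum hkn h0 L).
- exact: (main_lt hpos hsum hkn h0 hsort h1).
Qed.
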